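(* Let $\mathcal{D}$ be a $2$-$(|\mathcal{P}|,r+1,\lambda)$ design with point set $\mathcal{P}$, where $r>1$, admitting a group $G$ of automorphisms that is 2-transitive on points and transitive on blocks. Then there is at most one feasible $G$-orbit on the set of flags of $\mathcal{D}$.
   Context: Designs have no repeated blocks; blocks are identified with their point sets. A flag is a pair $(\sigma,L)$ with $\sigma$ a point and $L$ a block containing $\sigma$. For a $G$-orbit $\Omega$ on flags and a point $\sigma$, $\Omega(\sigma)$ is the set of flags of $\Omega$ with point-entry $\sigma$. $\Omega$ is feasible if $|\Omega(\sigma)|\ge 2$ for some (hence all) point $\sigma$, and for some (hence all) flag $(\sigma,L)\in\Omega$ the setwise stabilizer $G_{\sigma,L}$ of $L$ in $G_\sigma$ is transitive on $L\setminus\{\sigma\}$. *)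

(* Defs.v *)
From mathcomp Require Import all_boot all_fingroup.
Set Implicit Arguments. Unset Strict Implicit. Unset Printing Implicit Defensive.
Local Open Scope group_scope.

Section Designs.
Variable T : finType.

Definition blockimg (g : {perm T}) (L : {set T}) : {set T} := [set g x | x in L].

(* B is a 2-(|T|, k, lam) design on point set T (blocks identified with their
   point sets, so no repeated blocks). *)
Definition is_2design (B : {set {set T}}) (k lam : nat) : Prop :=
  (0 < lam)%N /\
  (forall L, L \in B -> #|L| = k) /\
  (forall x y : T, x != y -> #|[set L in B | (x \in L) && (y \in L)]| = lam).

Definition is_aut_group (B : {set {set T}}) (G : {group {perm T}}) : Prop :=
  forall g L, g \in G -> L \in B -> blockimg g L \in B.

Definition two_transitive (G : {group {perm T}}) : Prop :=
  forall x y x' y' : T, x != y -> x' != y' ->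
    exists2 g, g \in G & g x = x' /\ g y = y'.

Definition block_transitive (B : {set {set T}}) (G : {group {perm T}}) : Prop :=
  forall L L', L \in B -> L' \in B -> exists2 g, g \in G & blockimg g L = L'.

Definition flags (B : {set {set T}}) : {set T * {set T}} :=
  [set f | (f.2 \in B) && (f.1 \in f.2)].

Definition flagact (g : {perm T}) (f : T * {set T}) : T * {set T} :=
  (g f.1, blockimg g f.2).

Definition flag_orbit (G : {group {perm T}}) (f : T * {set T}) : {set T * {set T}} :=
  [set flagact g f | g in G].

Definition orbit_at (Om : {set T * {set T}}) (s : T) : {set T * {set T}} :=
  [set f in Om | f.1 == s].

Definition flag_stab (G : {group {perm T}}) (s : T) (L : {set T}) : {set {perm T}} :=
  [set g in G | (g s == s) && (blockimg g L == L)].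

Definition feasible (G : {group {perm T}}) (Om : {set T * {set T}}) : Prop :=
  (exists s : T, (2 <= #|orbit_at Om s|)%N) /\
  (exists2 f, f \in Om &
     forall x y, x \in f.2 :\ f.1 -> y \in f.2 :\ f.1 ->
       exists2 g, g \in flag_stab G f.1 f.2 & g x = y).

End Designs.

(* Main.v *)
Require Import Defs.
From mathcomp Require Import all_boot all_fingroup.
Set Implicit Arguments. Unset Strict Implicit. Unset Printing Implicit Defensive.
Local Open Scope group_scope.

Section Aux.
Variable T : finType.
Implicit Types (g h : {perm T}) (L : {set T}) (f : T * {set T}).

Lemma blockimgM g h L : blockimg (g * h) L = blockimg h (blockimg g L).
Proof.
rewrite /blockimg -imset_comp; apply: eq_imset => x /=; by rewrite permM.
Qed.

Lemma blockimg1 L : blockimg 1 L = L.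
Proof.
rewrite /blockimg (eq_imset _ (fun x => perm1 x)); exact: imset_id.
Qed.

Lemma blockimgK g L : blockimg g^-1 (blockimg g L) = L.
Proof. by rewrite -blockimgM mulgV blockimg1. Qed.

Lemma mem_blockimg g L x : (g x \in blockimg g L) = (x \in L).
Proof. rewrite /blockimg; apply: mem_imset; exact: perm_inj. Qed.

Lemma flagactM g h f : flagact (g * h) f = flagact h (flagact g f).
Proof. by rewrite /flagact /= permM blockimgM. Qed.

Lemma flagact1 f : flagact 1 f = f.
Proof. by case: f => a L; rewrite /flagact /= perm1 blockimg1. Qed.

Lemma orbit_act (G : {group {perm T}}) g f : g \in G ->
  flag_orbit G (flagact g f) = flag_orbit G f.
Proof.
move=> gG; apply/setP => x; apply/imsetP/imsetP => [[h hG ->]|[h hG ->]].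
  by exists (g * h); rewrite ?groupM // flagactM.
exists (g^-1 * h); first by rewrite groupM ?groupV.
by rewrite -flagactM mulgA mulgV mul1g.
Qed.

Lemma orbit_mem (G : {group {perm T}}) f f1 : f \in flag_orbit G f1 ->
  flag_orbit G f = flag_orbit G f1.
Proof. by case/imsetP => g gG ->; rewrite orbit_act. Qed.

Definition Ptrans (G : {group {perm T}}) a L :=
  forall x y, x \in L :\ a -> y \in L :\ a ->
       exists2 g, g \in flag_stab G a L & g x = y.

Lemma Ptrans_conj (G : {group {perm T}}) a L h : h \in G -> Ptrans G a L ->
  Ptrans G (h a) (blockimg h L).
Proof.
move=> hG P x y /setD1P[xa /imsetP[x0 x0L ex]] /setD1P[ya /imsetP[y0 y0L ey]].
subst x y; rewrite (inj_eq perm_inj) in xa; rewrite (inj_eq perm_inj) in ya.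
have [g gS gxy] := P x0 y0 ltac:(by rewrite in_setD1 xa x0L)
   ltac:(by rewrite in_setD1 ya y0L).
move: gS; rewrite inE => /andP[gG /andP[/eqP ga /eqP gL]].
exists (h^-1 * g * h).
  rewrite inE !groupM ?groupV //=; apply/andP; split.
    by rewrite !permM permK ga.
  by rewrite !blockimgM blockimgK gL.
by rewrite !permM permK gxy.
Qed.

Lemma third L a b : 2 < #|L| -> exists c, [/\ c \in L, c != a & c != b].
Proof.
move=> H.
case: (boolP [exists c, [&& c \in L, c != a & c != b]]).
  by case/existsP => c /and3P[] *; exists c.
move=> /existsPn N.
have: L \subset [set a; b].
  apply/subsetP => x xL; move: (N x); rewrite xL /= !inE.
  by case: (x == a); case: (x == b).
move/subset_leq_card => C.
move: C; rewrite cards2 => C.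
have := leq_trans H C; by case: (a != b).
Qed.

End Aux.

Theorem lemma3p1 (T : finType) (B : {set {set T}}) (r lam : nat)
  (G : {group {perm T}}) :
  (1 < r)%N ->
  is_2design B r.+1 lam ->
  is_aut_group B G ->
  two_transitive G ->
  block_transitive B G ->
  forall f1 f2, f1 \in flags B -> f2 \in flags B ->
    feasible G (flag_orbit G f1) -> feasible G (flag_orbit G f2) ->
    flag_orbit G f1 = flag_orbit G f2.
Proof.
move=> r1 [_ [Bk _]] aut _ btr f1 f2 F1 F2 [_ [w1 w1O P1]] [_ [w2 w2O P2]].
have inflags : forall f w, f \in flags B -> w \in flag_orbit G f ->
    w.2 \in B /\ w.1 \in w.2.
  move=> [a L] w; rewrite inE /= => /andP[LB aL] /imsetP[g gG ->] /=.
  by rewrite mem_blockimg; split=> //; exact: aut.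
have [L1B a1L] := inflags _ _ F1 w1O.
have [L2B a2L] := inflags _ _ F2 w2O.
rewrite -(orbit_mem w1O) -(orbit_mem w2O).
case: w1 {w1O} P1 L1B a1L => a L P1 LB aL.
case: w2 {w2O} P2 L2B a2L => b M P2 MB bM.
have [g gG gL] := btr _ _ MB LB; simpl in gL.
rewrite -(orbit_act (b, M) gG).
have P2' := Ptrans_conj gG P2; rewrite /= gL in P2'.
rewrite /flagact /= gL.
have bL : g b \in L by rewrite -gL mem_blockimg.
set b' := g b in P2' bL *.
case: (eqVneq a b') => [<- //|ab].
have [c [cL ca cb]] : exists c, [/\ c \in L, c != a & c != b'].
  apply: third; rewrite (Bk _ LB); by [].
have [h1 h1S h1b] := P1 b' c ltac:(by rewrite in_setD1 eq_sym ab bL)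
   ltac:(by rewrite in_setD1 ca cL).
have [h2 h2S h2c] := P2' c a ltac:(by rewrite in_setD1 cb cL)
   ltac:(by rewrite in_setD1 ab aL).
move: h1S h2S; rewrite !inE => /andP[h1G /andP[_ /eqP h1L]] /andP[h2G /andP[_ /eqP h2L]].
have hG : (h1 * h2)^-1 \in G by rewrite groupV groupM.
have hL : blockimg (h1 * h2) L = L by rewrite blockimgM h1L h2L.
rewrite -(orbit_act (a, L) hG) /flagact /=.
have -> : (h1 * h2)^-1 a = b'.
  by apply: (@perm_inj _ (h1 * h2)); rewrite permKV permM h1b h2c.
by rewrite -{1}hL blockimgK.
Qed.
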